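(* Let $V$ be a finite set, $M$ a matching on $V$ and $A \subseteq V(M)$ with $A \cap m(A) = \emptyset$. Let $s \ge 0$ be an integer and let $H$ be a graph with vertex set contained in $V$ which is a vertex-disjoint union of non-trivial cliques having in total at least $2|M|+s$ vertices, and such that no edge of $H$ has both endpoints in $A \cup (V \setminus V(M))$. Then $H$ contains a matching of size $s$ each of whose edges has one endpoint in $V(M)\setminus (A \cup m(A))$ and the other endpoint in $A \cup (V\setminus V(M))$.
   Context: For a matching $M$ and $A \subseteq V(M)$, $m(A)$ denotes the set of vertices matched in $M$ to the vertices of $A$. A non-trivial clique is a complete graph on at least $2$ vertices. *)

(* Defs.v *)
From mathcomp Require Import all_boot.
Set Implicit Arguments. Unset Strict Implicit. Unset Printing Implicit Defensive.

Section Defs.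
Variable T : finType.

Definition is_matching (M : {set {set T}}) : bool :=
  [forall e in M, #|e| == 2] && trivIset M.

Definition Vm (M : {set {set T}}) : {set T} := cover M.

Definition mate (M : {set {set T}}) (A : {set T}) : {set T} :=
  [set y | [exists x in A, [set x; y] \in M]].

(* A graph H given as a vertex-disjoint union of non-trivial cliques:
   P is the family of vertex sets of the cliques. *)
Definition clique_union (P : {set {set T}}) : bool :=
  trivIset P && [forall B in P, 1 < #|B|].

Definition VH (P : {set {set T}}) : {set T} := cover P.

Definition hedge (P : {set {set T}}) (x y : T) : bool :=
  (x != y) && [exists B in P, (x \in B) && (y \in B)].
End Defs.

(* Main.v *)
Require Import Defs.
From mathcomp Require Import all_boot.
From mathcomp Require Import zify.

Lemma sub_card_k (U : finType) (k : nat) (X : {set U}) :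
  k <= #|X| -> exists Y : {set U}, Y \subset X /\ #|Y| = k.
Proof.
elim: k => [|k IH] H.
  by exists set0; rewrite sub0set cards0.
have [Y [sYX cY]] := IH (ltnW H).
have : 0 < #|X :\: Y|.
  by rewrite cardsD (setIidPr sYX) cY; lia.
case/card_gt0P => z; rewrite inE => /andP [zY zX].
exists (z |: Y); split.
  by rewrite subUset sub1set zX sYX.
by rewrite cardsU1 zY cY.
Qed.

Lemma match_uniq (T : finType) (M : {set {set T}}) x y y' :
  is_matching M -> [set x; y] \in M -> [set x; y'] \in M -> y = y'.
Proof.
case/andP => /forall_inP c2 /trivIsetP tM e1 e2.
have E : [set x; y] = [set x; y'].
  apply/eqP; apply: contraT => ne.
  have := tM _ _ e1 e2 ne; move/disjointFr => /(_ x).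
  by rewrite !inE !eqxx => /(_ isT).
have := c2 _ e1; rewrite cards2 => /eqP [] xy.
have : y \in [set x; y'] by rewrite -E !inE eqxx orbT.
by rewrite !inE => /orP [/eqP yx|/eqP //]; rewrite yx eqxx in xy.
Qed.

Theorem lemma2p3 (T : finType) (M : {set {set T}}) (A : {set T}) (s : nat)
    (P : {set {set T}}) :
  is_matching M ->
  A \subset Vm M ->
  [disjoint A & mate M A] ->
  clique_union P ->
  2 * #|M| + s <= #|VH P| ->
  (forall x y, hedge P x y ->
     ~~ ((x \in A :|: ~: Vm M) && (y \in A :|: ~: Vm M))) ->
  exists N : {set {set T}},
    [/\ is_matching N, #|N| = s &
      forall e, e \in N -> exists x y,
        [/\ e = [set x; y], hedge P x y,
            x \in Vm M :\: (A :|: mate M A) & y \in A :|: ~: Vm M]].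
Proof.
move=> mM sAV dAm cuP hcard hW.
have mM' := mM.
case/andP: mM' => /forall_inP c2 tM.
case/andP: cuP => tP /forall_inP bigP.
set W := A :|: ~: Vm M.
set mA := mate M A.
set C := Vm M :\: (A :|: mA).
have cV : #|Vm M| = 2 * #|M|.
  move: tM; rewrite /trivIset => /eqP <-.
  rewrite (eq_bigr (fun _ => 2)); last by move=> e eM; apply/eqP/c2.
  by rewrite sum_nat_const mulnC.
have smA : mA \subset Vm M.
  apply/subsetP => y; rewrite inE => /exists_inP [x _ xyM].
  by apply/bigcupP; exists [set x; y] => //; rewrite !inE eqxx orbT.
have cmA : #|mA| <= #|A|.
  pose partner x := odflt x [pick y | [set x; y] \in M].
  apply: (leq_trans _ (leq_imset_card partner A)).
  apply: subset_leq_card; apply/subsetP => y; rewrite inE => /exists_inP [x xA xyM].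
  apply/imsetP; exists x => //; rewrite /partner.
  case: pickP => [y' xy'M /=|/(_ y)]; last by rewrite xyM.
  exact: (@match_uniq _ _ _ _ _ mM xyM xy'M).
have cC : #|C| + #|A| + #|mA| = #|Vm M|.
  have := cardsID (A :|: mA) (Vm M).
  rewrite (setIidPr _); last by rewrite subUset sAV smA.
  rewrite cardsU (disjoint_setI0 dAm) cards0. rewrite -/C; lia.
have hedgeB : forall B x y, B \in P -> x \in B -> y \in B -> x != y -> hedge P x y.
  by move=> B x y BP xB yB xy; rewrite /hedge xy; apply/exists_inP; exists B => //; rewrite xB yB.
have WC : forall x, x \in C -> x \notin W.
  by move=> x; rewrite !inE negb_or => /andP [/andP [xA _] ->]; rewrite (negbTE xA).
have h4 : #|VH P| <= #|VH P :&: W| + #|VH P :&: mA| + #|C|.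
  have sub : VH P \subset (VH P :&: W) :|: (VH P :&: mA) :|: C.
    apply/subsetP => x xV; rewrite !inE xV /=.
    by case: (x \in A); case: (x \in Vm M); case: [exists x0 in A, [set x0; x] \in M].
  apply: (leq_trans (subset_leq_card sub)).
  rewrite !cardsU; lia.
set Q := [set B in P | [exists x in B, x \in W]].
set Q1 := Q :&: [set B : {set T} | [exists y in B, y \in C]].
set Q2 := Q :\: Q1.
have cQ : #|Q :&: Q1| + #|Q2| = #|Q| by apply: cardsID.
rewrite (setIidPr _) in cQ; last by apply: subsetIl.
have hW1 : #|VH P :&: W| <= #|Q|.
  rewrite -(@card_in_imset _ _ (pblock P)).
    apply: subset_leq_card; apply/subsetP => B /imsetP [x]; rewrite in_setI => /andP [xV xW] ->.
    rewrite inE pblock_mem //=; apply/exists_inP; exists x => //.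
    by rewrite mem_pblock.
  move=> x y; rewrite !in_setI => /andP [xV xW] /andP [yV yW] e.
  apply/eqP; apply: contraT => xy.
  have := hW x y; rewrite xW yW /= => H; apply: H.
  apply: (hedgeB (pblock P x)) => //; first exact: pblock_mem.
    by rewrite mem_pblock.
  by rewrite e mem_pblock.
have hQ2 : #|Q2| <= #|VH P :&: mA|.
  apply: (leq_trans _ (leq_imset_card (pblock P) _)).
  apply: subset_leq_card; apply/subsetP => B.
  rewrite !inE => /andP [nC /andP [BP /exists_inP [x xB xW]]].
  have {}nC : ~~ [exists y in B, y \in C].
    move: nC; apply: contra => HC; rewrite HC andbT.
    by rewrite BP /=; apply/exists_inP; exists x.
  have : 1 < #|B| by apply: bigP.
  rewrite (cardD1 x) xB add1n ltnS => /card_gt0P [z]; rewrite !inE => /andP [zx zB].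
  have zm : z \in mA.
    have zW : z \notin W.
      have xz : x != z by rewrite eq_sym.
      by have := hW x z (hedgeB B x z BP xB zB xz); rewrite xW.
    move: nC; apply: contraR => zm; apply/exists_inP; exists z => //.
    move: zW zm; rewrite /C /W in_setD !in_setU in_setC.
    by case: (z \in A); case: (z \in Vm M); case: (z \in mA).
  apply/imsetP; exists z; last by rewrite (def_pblock tP BP zB).
  rewrite in_setI zm andbT; apply/bigcupP; exists B => //.
have hmA : #|VH P :&: mA| <= #|mA| by apply: subset_leq_card; apply: subsetIr.
have hQ1 : s <= #|Q1| by lia.
have [Q' [sQ' cQ']] := sub_card_k _ _ _ hQ1.
pose f (B : {set T}) : {set T} :=
  if [pick x in B :&: W] is Some w then
    (if [pick y in B :&: C] is Some c then [set c; w] else set0) else set0.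
have Q1P : forall B, B \in Q1 -> B \in P.
  by move=> B; rewrite in_setI in_set => /andP [/andP [] ].
have fP : forall B, B \in Q1 -> exists c w,
    [/\ f B = [set c; w], c \in B, c \in C, w \in B & w \in W].
  move=> B; rewrite in_setI in_set [in X in _ && X]in_set => /andP [/andP [BP /exists_inP [w wB wW]] /exists_inP [c cB cC']].
  rewrite /f; case: pickP => [w'|]; last by move/(_ w); rewrite in_setI wB wW.
  rewrite in_setI => /andP [w'B w'W].
  case: pickP => [c'|]; last by move/(_ c); rewrite in_setI cB cC'.
  rewrite in_setI => /andP [c'B c'C].
  by exists c', w'; split.
have cw : forall c w, c \in C -> w \in W -> c != w.
  by move=> c w cC' wW; apply/eqP => cwE; move: (WC c cC'); rewrite cwE wW.
have fsub : forall B, B \in Q1 -> f B \subset B.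
  move=> B BQ; have [c [w [-> cB _ wB _]]] := fP B BQ.
  by rewrite subUset !sub1set cB wB.
have inj : {in Q' &, injective f}.
  move=> B1 B2 /(subsetP sQ') B1Q /(subsetP sQ') B2Q fE.
  have [c [w [fB1 cB _ _ _]]] := fP B1 B1Q.
  have cB2 : c \in B2.
    apply: (subsetP (fsub B2 B2Q)); rewrite -fE fB1 !inE eqxx //.
  by rewrite -(def_pblock tP (Q1P _ B1Q) cB) (def_pblock tP (Q1P _ B2Q) cB2).
exists (f @: Q'); split.
- apply/andP; split.
    apply/forall_inP => e /imsetP [B /(subsetP sQ') BQ ->].
    have [c [w [-> _ cC' _ wW]]] := fP B BQ.
    by rewrite cards2 (cw c w cC' wW).
  apply/trivIsetP => e1 e2 /imsetP [B1 B1Q' ->] /imsetP [B2 B2Q' ->] ne.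
  have B1Q := subsetP sQ' _ B1Q'; have B2Q := subsetP sQ' _ B2Q'.
  have nB : B1 != B2 by apply: contraNneq ne => ->.
  have := (trivIsetP tP) _ _ (Q1P _ B1Q) (Q1P _ B2Q) nB.
  move=> d; apply: (disjointWl (fsub _ B1Q)); exact: (disjointWr (fsub _ B2Q)).
- by rewrite card_in_imset.
- move=> e /imsetP [B /(subsetP sQ') BQ ->].
  have [c [w [fB cB cC' wB wW]]] := fP B BQ.
  exists c, w; split => //.
  exact: (hedgeB B c w (Q1P _ BQ) cB wB (cw c w cC' wW)).
Qed.
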